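(* Let $X$ be a compactum, let $n\geq2$, let $A\in F_n(X)$, and let $f:X\to X$ be a function. Consider the statements: (1) each $x\in A$ is a quasi-periodic point of $f$; (2) $A$ is a quasi-periodic point of $F_n(f)$; (3) $q(A)$ is a quasi-periodic point of $SF_n(f)$. Then (1) implies (2), and (2) implies (3).
   Context: A compactum is a nondegenerate compact, perfect, Hausdorff topological space. $F_n(X)$ is the set of nonempty subsets of $X$ with at most $n$ points, with the Vietoris topology; $F_1(X)=\{\{x\}:x\in X\}$; $F_n(f)(A)=f(A)$. For $n\geq2$, $SF_n(X)=F_n(X)/F_1(X)$ is the quotient collapsing $F_1(X)$ to a point, $q:F_n(X)\to SF_n(X)$ the quotient map, $F_X=q(F_1(X))$, and $SF_n(f)(\chi)=q(F_n(f)(q^{-1}(\chi)))$ for $\chi\neq F_X$, $SF_n(f)(F_X)=F_X$. A point $x$ is a quasi-periodic point of $g:Z\to Z$ if for every open $U\ni x$ there is $m\in\mathbb{N}$ with $g^{km}(x)\in U$ for all integers $k\geq0$. *)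

(* Defs.v *)
From mathcomp Require Import all_boot all_order.
From mathcomp Require Import all_classical all_reals all_analysis.
Set Implicit Arguments. Unset Strict Implicit. Unset Printing Implicit Defensive.
Local Open Scope classical_set_scope.

Definition compactum (X : topologicalType) : Prop :=
  [/\ compact [set: X], hausdorff_space X, perfect_set [set: X]
    & exists x y : X, x <> y].

Definition quasi_periodic {Z : Type} (opn : set Z -> Prop) (g : Z -> Z) (x : Z) : Prop :=
  forall U : set Z, opn U -> U x ->
    exists2 m : nat, (0 < m)%N & forall k : nat, U (iter (k * m) g x).

Section Hyperspaces.
Variable X : topologicalType.

Definition Fn (n : nat) : set (set X) :=
  [set A | A !=set0 /\ exists s : seq X, (size s <= n)%N /\ A = [set x | x \in s]].

Definition F1 : set (set X) := [set A | exists x : X, A = [set x]].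

Definition vietoris_basic (Us : seq (set X)) : set (set X) :=
  [set B | B `<=` \bigcup_(U in [set U | U \in Us]) U /\
           forall U, U \in Us -> B `&` U !=set0].

Definition Fn_open (n : nat) (W : set (set X)) : Prop :=
  W `<=` Fn n /\
  forall A, W A -> exists Us : seq (set X),
    (forall U, U \in Us -> open U) /\ vietoris_basic Us A /\
    Fn n `&` vietoris_basic Us `<=` W.

Definition Fn_map (f : X -> X) (A : set X) : set X := f @` A.

(* Quotient map q : F_n(X) -> SF_n(X) = F_n(X)/F_1(X); points of SF_n(X)
   are the equivalence classes: F_X = F_1(X), and {A} for A not in F_1(X). *)
Definition q (A : set X) : set (set X) :=
  if `[< F1 A >] then F1 else [set A].

Definition F_X : set (set X) := F1.

Definition SFn (n : nat) : set (set (set X)) := q @` Fn n.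

Definition SFn_open (n : nat) (V : set (set (set X))) : Prop :=
  V `<=` SFn n /\ Fn_open n (Fn n `&` q @^-1` V).

(* SF_n(f)(chi) = q(F_n(f)(q^-1(chi))) for chi <> F_X, and SF_n(f)(F_X) = F_X.
   For chi <> F_X in SF_n(X), q^-1(chi) is the single point A with chi = {A}. *)
Definition SFn_map (f : X -> X) (chi : set (set X)) : set (set X) :=
  if `[< chi = F_X >] then F_X
  else \bigcup_(A in chi) q (Fn_map f A).

End Hyperspaces.

(* Main.v *)
Require Import Defs.
From mathcomp Require Import all_boot all_order.
From mathcomp Require Import all_classical all_reals all_analysis.
Local Open Scope classical_set_scope.
Set Implicit Arguments. Unset Strict Implicit.

Section Helpers.
Variable X : topologicalType.
Variable f : X -> X.

Lemma iterF j (B : set X) : iter j (Fn_map f) B = iter j f @` B.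
Proof.
elim: j => [|j IH] /=.
  by apply/seteqP; split => x; [move=> Bx; exists x | case=> y By <-].
rewrite IH /Fn_map; apply/seteqP; split => y.
  by case=> _ [x Bx <-] <-; exists x.
by case=> x Bx <-; exists (iter j f x) => //; exists x.
Qed.

Lemma common_m (s : seq X) (V : X -> set X) :
  (forall x, x \in s -> [/\ quasi_periodic open f x, open (V x) & V x x]) ->
  exists2 m, (0 < m)%N & forall x k, x \in s -> V x (iter (k * m) f x).
Proof.
elim: s => [|a s IH] H.
  by exists 1%N => // x k; rewrite in_nil.
have [m1 m1p Hm1] := IH (fun x xs => H x ltac:(by rewrite inE xs orbT)).
have [qa oa va] := H a (mem_head a s).
have [m2 m2p Hm2] := qa _ oa va.
exists (m1 * m2)%N; first by rewrite muln_gt0 m1p.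
move=> x k; rewrite inE => /orP [/eqP -> | xs].
  by rewrite mulnA; exact: Hm2.
by rewrite (mulnC m1 m2) mulnA; exact: Hm1.
Qed.

Definition Vx (Us : seq (set X)) (x : X) : set X :=
  foldr (fun U acc => if `[< U x >] then U `&` acc else acc) setT Us.

Lemma Vx_open (Us : seq (set X)) (x : X) : (forall U, U \in Us -> open U) -> open (Vx Us x).
Proof.
elim: Us => [|U Us IH] H /=; first exact: openT.
have IH' := IH (fun V Vs => H V ltac:(by rewrite inE Vs orbT)).
case: asboolP => _ //; apply: openI => //; apply: H; exact: mem_head.
Qed.

Lemma Vx_in (Us : seq (set X)) (x : X) : Vx Us x x.
Proof. by elim: Us => [|U Us IH] //=; case: asboolP. Qed.

Lemma Vx_sub (Us : seq (set X)) (x : X) (U : set X) : U \in Us -> U x -> Vx Us x `<=` U.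
Proof.
elim: Us => [|V Us IH] //=; rewrite inE => /orP [/eqP <- | Us'] Ux.
  by case: asboolP => // _ y [].
case: asboolP => _; last exact: IH.
by move=> y [_ ?]; apply: (IH Us').
Qed.

Lemma SFq (B : set X) : SFn_map f (q B) = q (Fn_map f B).
Proof.
rewrite /SFn_map /q.
case: (asboolP (F1 B)) => HB.
  have -> : `[< F1 (X:=X) = F_X (X:=X) >] = true by apply/asboolP.
  case: HB => x ->.
  have -> : `[< F1 (Fn_map f [set x]) >] = true.
    apply/asboolP; exists (f x); rewrite /Fn_map image_set1 //.
  by [].
have -> : `[< [set B] = F_X (X:=X) >] = false.
  apply/asboolP => E; apply: HB; rewrite /F_X in E.
  by rewrite -E.
by rewrite bigcup_set1.
Qed.

Lemma iterSF j (B : set X) :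
  iter j (SFn_map f) (q B) = q (iter j (Fn_map f) B).
Proof. by elim: j => [|j IH] //=; rewrite IH SFq. Qed.

End Helpers.

Theorem theorem6 (X : topologicalType) (hX : compactum X) (n : nat) (hn : (2 <= n)%N)
  (A : set X) (hA : Fn n A) (f : X -> X) :
  ((forall x, A x -> quasi_periodic open f x) ->
     quasi_periodic (Fn_open n) (Fn_map f) A) /\
  (quasi_periodic (Fn_open n) (Fn_map f) A ->
     quasi_periodic (SFn_open n) (SFn_map f) (q A)).
Proof.
split.
  move=> Hq W [_ HW] WA.
  have [Us [hop [[hsub hmeet] hincl]]] := HW A WA.
  case: hA => hA0 [s [hs EA]].
  have [m mp Hm] := @common_m X f s (Vx Us)
    (fun x xs => And3 (Hq x ltac:(by rewrite EA)) (Vx_open x hop) (Vx_in Us x)).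
  exists m => // k; apply: hincl; rewrite iterF; split.
    split.
      by case: hA0 => x Ax; exists (iter (k * m) f x); exists x.
    exists (map (iter (k * m) f) s); split; first by rewrite size_map.
    apply/seteqP; split => y.
      by case=> x; rewrite EA => xs <-; apply: map_f.
    by move=> /= /mapP [x xs ->]; exists x => //; rewrite EA.
  split.
    move=> y [x Ax <-].
    have xs : x \in s by move: Ax; rewrite EA.
    have [U Us' Ux] := hsub x Ax.
    exists U => //; apply: (Vx_sub Us' Ux); exact: Hm.
  move=> U UUs; have [x [Ax Ux]] := hmeet U UUs.
  have xs : x \in s by move: Ax; rewrite EA.
  exists (iter (k * m) f x); split; first by exists x.
  by apply: (Vx_sub UUs Ux); exact: Hm.
move=> Hq V [_ HV] VqA.
have [m mp Hm] := Hq _ HV (conj hA VqA).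
exists m => // k; rewrite iterSF; exact: (Hm k).2.
Qed.
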